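(* Let $m,d,n\ge1$, $p,q,\lambda>0$, $g(\alpha)=\|\alpha/\lambda\|_p^q$, and let $X=[x_1,\dots,x_n]\in\mathbb{R}^{m\times n}$ be fixed. For $D\in\mathbb{R}^{m\times d}$ define $$L_X(D)=\inf_{\epsilon>0}\sup_{A\in\mathfrak{A}_\epsilon(X,D)}\tfrac1n\|(X-DA)A^\top\|_\star,\qquad C_X(D)=\inf_{\epsilon>0}\sup_{A\in\mathfrak{A}_\epsilon(X,D)}\tfrac{1}{2n}\sum_{i=1}^n\|\alpha_i\|_1^2 .$$ Then there exist finite constants $L_X$ and $C_X$, not depending on $D$, such that $L_X(D)\le L_X$ and $C_X(D)\le C_X$ for every $D\in\mathbb{R}^{m\times d}$.
   Context: For $x\in\mathbb{R}^m$, $f_x(D)=\inf_{\alpha\in\mathbb{R}^d}\tfrac12\|x-D\alpha\|_2^2+g(\alpha)$. For $\epsilon>0$, $\mathfrak{A}_\epsilon(X,D)$ is the set of matrices $A=[\alpha_1,\dots,\alpha_n]\in\mathbb{R}^{d\times n}$ with $\tfrac12\|x_i-D\alpha_i\|_2^2+g(\alpha_i)\le f_{x_i}(D)+\epsilon$ for all $i$. For a matrix $M$ with columns $m_i$, $\|M\|=\|M\|_{1\to2}=\max_i\|m_i\|_2$, and $\|M\|_\star=\sup_{\|U\|_{1\to2}\le1}\langle M,U\rangle_F$ is its dual norm with respect to the Frobenius inner product. For $0<p<1$, $\|\cdot\|_p$ is the $\ell_p$ quasi-norm. *)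

(* Defs.v *)
From HB Require Import structures.
From mathcomp Require Import all_boot all_order all_algebra.
From mathcomp Require Import all_classical all_reals all_analysis.
Set Implicit Arguments. Unset Strict Implicit. Unset Printing Implicit Defensive.
Import Order.TTheory GRing.Theory Num.Theory.
Local Open Scope classical_set_scope.
Local Open Scope ring_scope.

Section Defs.
Variable R : realType.

Definition l2norm {k : nat} (v : 'cV[R]_k) : R := Num.sqrt (\sum_i v i 0 ^+ 2).
Definition l1norm {k : nat} (v : 'cV[R]_k) : R := \sum_i `|v i 0|.
Definition lpnorm {k : nat} (p : R) (v : 'cV[R]_k) : R :=
  (\sum_i `|v i 0| `^ p) `^ p^-1.

Definition norm12 {a b : nat} (M : 'M[R]_(a, b)) : R :=
  \big[Num.max/0]_j l2norm (col j M).
Definition frob {a b : nat} (M U : 'M[R]_(a, b)) : R :=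
  \sum_i \sum_j M i j * U i j.
Definition dualnorm12 {a b : nat} (M : 'M[R]_(a, b)) : \bar R :=
  ereal_sup [set (frob M U)%:E | U in [set U : 'M[R]_(a, b) | norm12 U <= 1]].

Definition gpen (p q lam : R) {k : nat} (al : 'cV[R]_k) : R :=
  lpnorm p (lam^-1 *: al) `^ q.

Definition objective {m d : nat} (g : 'cV[R]_d -> R)
  (x : 'cV[R]_m) (D : 'M[R]_(m, d)) (al : 'cV[R]_d) : R :=
  2^-1 * l2norm (x - D *m al) ^+ 2 + g al.

Definition fx {m d : nat} (g : 'cV[R]_d -> R)
  (x : 'cV[R]_m) (D : 'M[R]_(m, d)) : \bar R :=
  ereal_inf [set (objective g x D al)%:E | al in [set: 'cV[R]_d]].

Definition Aeps {m d n : nat} (g : 'cV[R]_d -> R)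
  (X : 'M[R]_(m, n)) (D : 'M[R]_(m, d)) (eps : R) : set 'M[R]_(d, n) :=
  [set A | forall i : 'I_n,
     ((objective g (col i X) D (col i A))%:E <= fx g (col i X) D + eps%:E)%E].

Definition LXD {m d n : nat} (g : 'cV[R]_d -> R)
  (X : 'M[R]_(m, n)) (D : 'M[R]_(m, d)) : \bar R :=
  ereal_inf [set ereal_sup
     [set ((n%:R)^-1)%:E * dualnorm12 ((X - D *m A) *m A^T) | A in Aeps g X D eps]%E
   | eps in [set e : R | 0 < e]].

Definition CXD {m d n : nat} (g : 'cV[R]_d -> R)
  (X : 'M[R]_(m, n)) (D : 'M[R]_(m, d)) : \bar R :=
  ereal_inf [set ereal_sup
     [set ((2 * n%:R)^-1 * \sum_i l1norm (col i A) ^+ 2)%:E | A in Aeps g X D eps]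
   | eps in [set e : R | 0 < e]].

End Defs.

(* Main.v *)
Require Import Defs.
From HB Require Import structures.
From mathcomp Require Import all_boot all_order all_algebra.
From mathcomp Require Import all_classical all_reals all_analysis.
From mathcomp Require Import lra.
Import Order.TTheory GRing.Theory Num.Theory.
Local Open Scope classical_set_scope.
Local Open Scope ring_scope.

Section H.
Variable R : realType.

Lemma l2_ge0 {k} (v : 'cV[R]_k) : 0 <= l2norm v.
Proof. exact: sqrtr_ge0. Qed.

Lemma entry_le_l2 {k} (v : 'cV[R]_k) j : `|v j 0| <= l2norm v.
Proof.
rewrite /l2norm -sqrtr_sqr ler_sqrt; last by apply: sumr_ge0 => i _; apply: sqr_ge0.
rewrite (bigD1 j) //= lerDl; apply: sumr_ge0 => i _; apply: sqr_ge0.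
Qed.

Lemma entry_le_norm12 a b (U : 'M[R]_(a, b)) i j : `|U i j| <= norm12 U.
Proof.
apply: (le_trans (y := l2norm (col j U))).
  by have := entry_le_l2 (col j U) i; rewrite mxE.
exact: (le_bigmax (0:R) (fun j => l2norm (col j U)) j).
Qed.

Lemma g_entry p q lam {k} (v : 'cV[R]_k) j : 0 < p -> 0 < q -> 0 < lam ->
  `|v j 0| <= lam * (gpen p q lam v) `^ q^-1.
Proof.
move=> hp hq hl.
set y := `|(lam^-1 *: v) j 0|.
have hy : `|v j 0| = lam * y.
  rewrite /y mxE normrM ger0_norm ?invr_ge0 ?ltW // mulrA mulfV ?gt_eqF // mul1r //.
rewrite hy ler_pM2l //.
have y0 : 0 <= y by exact: normr_ge0.
have -> : gpen p q lam v `^ q^-1 = lpnorm p (lam^-1 *: v).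
  by rewrite /gpen -powRrM mulfV ?gt_eqF // powRr1 // powR_ge0.
have -> : y = (y `^ p) `^ p^-1 by rewrite -powRrM mulfV ?gt_eqF // powRr1.
have Hle : y `^ p <= \sum_i `|(lam^-1 *: v) i 0| `^ p.
  rewrite (bigD1 j) //= lerDl; apply: sumr_ge0 => i _; apply: powR_ge0.
rewrite /lpnorm; apply: ge0_ler_powR => //; rewrite ?invr_ge0 ?ltW // ?nnegrE ?powR_ge0 //.
by apply: sumr_ge0 => i _; apply: powR_ge0.
Qed.


Lemma obj_bound {m d n : nat} p q lam (X : 'M[R]_(m, n)) (D : 'M[R]_(m, d)) A i :
  0 < p -> 0 < q -> 0 < lam ->
  Aeps (gpen p q lam) X D 1 A ->
  objective (gpen p q lam) (col i X) D (col i A) <=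
  \sum_i0 (2^-1 * l2norm (col i0 X) ^+ 2 + gpen p q lam (0 : 'cV[R]_d)) + 1.
Proof.
move=> hp hq hl /(_ i) hA.
have h0 : (fx (gpen p q lam) (col i X) D <= (objective (gpen p q lam) (col i X) D 0)%:E)%E.
  by apply: ereal_inf_lbound; exists 0.
have : ((objective (gpen p q lam) (col i X) D (col i A))%:E <=
        (objective (gpen p q lam) (col i X) D 0)%:E + 1%:E)%E.
  by apply: le_trans hA _; apply: leeD2r.
rewrite -EFinD lee_fin => h; apply: le_trans h _.
rewrite lerD2r /objective mulmx0 subr0 (bigD1 i) //= lerDl.
apply: sumr_ge0 => k _; apply: addr_ge0; last exact: powR_ge0.
by apply: mulr_ge0; [rewrite invr_ge0 | apply: sqr_ge0].
Qed.


Lemma entryA_bound {m d n : nat} p q lam (X : 'M[R]_(m, n)) (D : 'M[R]_(m, d)) A K i j :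
  0 < p -> 0 < q -> 0 < lam ->
  objective (gpen p q lam) (col i X) D (col i A) <= K ->
  `|A j i| <= lam * K `^ q^-1.
Proof.
move=> hp hq hl hK.
have hg : gpen p q lam (col i A) <= K.
  apply: le_trans hK; rewrite /objective lerDr.
  by apply: mulr_ge0; [rewrite invr_ge0 | apply: sqr_ge0].
have := @g_entry p q lam _ (col i A) j hp hq hl; rewrite mxE => h.
apply: le_trans h _; rewrite ler_pM2l //.
apply: ge0_ler_powR => //; rewrite ?invr_ge0 ?ltW // ?nnegrE ?powR_ge0 //.
exact: le_trans (powR_ge0 _ _) hg.
Qed.

Lemma entryR_bound {m d n : nat} p q lam (X : 'M[R]_(m, n)) (D : 'M[R]_(m, d)) A K i j :
  objective (gpen p q lam) (col i X) D (col i A) <= K ->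
  `|(X - D *m A) j i| <= 1 + 2 * K.
Proof.
move=> hK.
have e : (X - D *m A) j i = (col i X - D *m col i A) j 0.
  rewrite !mxE; congr (_ - _); apply: eq_bigr => k _; by rewrite !mxE.
have h1 := entry_le_l2 (col i X - D *m col i A) j.
rewrite -e in h1.
have hr : 2^-1 * l2norm (col i X - D *m col i A) ^+ 2 <= K.
  apply: le_trans hK; rewrite /objective lerDl; exact: powR_ge0.
have h0 := l2_ge0 (col i X - D *m col i A).
set a := `|(X - D *m A) j i| in h1 *.
set l := l2norm _ in h1 hr h0.
have a0 : 0 <= a by exact: normr_ge0.
nra.
Qed.

End H.

Theorem proposition2 (R : realType) (m d n : nat)
  (hm : (0 < m)%N) (hd : (0 < d)%N) (hn : (0 < n)%N)
  (p q lam : R) (hp : 0 < p) (hq : 0 < q) (hlam : 0 < lam)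
  (X : 'M[R]_(m, n)) :
  exists LX CX : R, forall D : 'M[R]_(m, d),
    (LXD (gpen p q lam) X D <= LX%:E)%E /\ (CXD (gpen p q lam) X D <= CX%:E)%E.
Proof.
set K := \sum_i0 (2^-1 * l2norm (col i0 X) ^+ 2 + gpen p q lam (0 : 'cV[R]_d)) + 1.
have K0 : 0 <= K.
  apply: addr_ge0 => //; apply: sumr_ge0 => k _; apply: addr_ge0; last exact: powR_ge0.
  by apply: mulr_ge0; [rewrite invr_ge0 | apply: sqr_ge0].
set Ba := lam * K `^ q^-1.
set Br := 1 + 2 * K.
have Ba0 : 0 <= Ba by apply: mulr_ge0; [exact: ltW | exact: powR_ge0].
have Br0 : 0 <= Br by apply: addr_ge0 => //; apply: mulr_ge0.
have bA : forall (D : 'M[R]_(m, d)) (A : 'M[R]_(d, n)), Aeps (gpen p q lam) X D 1 A -> forall i j, `|A j i| <= Ba.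
  move=> D A hA i j.
  exact: (entryA_bound _ _ _ _ _ _ _ _ _ _ hp hq hlam (obj_bound _ _ _ _ _ _ _ _ hp hq hlam hA)).
have bR : forall (D : 'M[R]_(m, d)) (A : 'M[R]_(d, n)), Aeps (gpen p q lam) X D 1 A -> forall i j,
    `|(X - D *m A) j i| <= Br.
  move=> D A hA i j.
  exact: (entryR_bound _ _ _ _ _ _ _ _ _ _ (obj_bound _ _ _ _ _ _ _ _ hp hq hlam hA)).
exists (n%:R^-1 * ((Br * Ba) *+ n *+ d *+ m)),
       ((2 * n%:R)^-1 * ((Ba *+ d) ^+ 2 *+ n)) => D; split.
- apply: le_trans; first by apply: ereal_inf_lbound; exists 1; first exact: ltr01.
  apply: ge_ereal_sup => _ [A hA <-].
  rewrite EFinM; apply: lee_wpmul2l; first by rewrite lee_fin invr_ge0.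
  apply: ge_ereal_sup => _ [U hU <-]; rewrite lee_fin.
  have hb : forall i j, ((X - D *m A) *m A^T) i j * U i j <= (Br * Ba) *+ n.
    move=> i j.
    apply: le_trans (ler_norm _) _; rewrite normrM.
    have hU1 : `|U i j| <= 1 := le_trans (entry_le_norm12 _ _ _ U i j) hU.
    have h2 : `|((X - D *m A) *m A^T) i j| * `|U i j| <= `|((X - D *m A) *m A^T) i j| * 1.
      by apply: ler_wpM2l => //; exact: normr_ge0.
    apply: le_trans h2 _.
    rewrite mulr1 mxE.
    apply: le_trans (ler_norm_sum _ _ _) _.
    have -> : (Br * Ba) *+ n = \sum_(k < n) (Br * Ba) by rewrite sumr_const card_ord.
    apply: ler_sum => k _; rewrite normrM.
    apply: ler_pM => //; [exact: (bR D A hA k i) | rewrite mxE; exact: (bA D A hA k j)].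
  rewrite /frob.
  apply: le_trans (ler_sum _ (fun i _ => ler_sum _ (fun j _ => hb i j))) _.
  by rewrite sumr_const card_ord sumr_const card_ord.
- apply: le_trans; first by apply: ereal_inf_lbound; exists 1; first exact: ltr01.
  apply: ge_ereal_sup => _ [A hA <-]; rewrite lee_fin.
  apply: ler_wpM2l; first by rewrite invr_ge0; apply: mulr_ge0 => //.
  have -> : (Ba *+ d) ^+ 2 *+ n = \sum_(k < n) (Ba *+ d) ^+ 2 by rewrite sumr_const card_ord.
  apply: ler_sum => i _.
  have hl0 : 0 <= l1norm (col i A) by apply: sumr_ge0 => k _; exact: normr_ge0.
  have hl : l1norm (col i A) <= Ba *+ d.
    have -> : Ba *+ d = \sum_(k < d) Ba by rewrite sumr_const card_ord.
    by apply: ler_sum => k _; rewrite mxE; exact: bA.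
  set l := l1norm _ in hl0 hl *; set c := Ba *+ d in hl *.
  nra.
Qed.
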